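(* Let $\mathbf A$ be a Mal'cev algebra, let $n\ge 1$, and let $\alpha_0,\dots,\alpha_{n-1}$ be congruences of $\mathbf A$. Then \[ [\alpha_0,\dots,\alpha_{n-1}] = \psi_{2^n-1}\big(\Delta(\alpha_0,\dots,\alpha_{n-1})\big). \]
   Context: A Mal'cev algebra is an algebra having a ternary term operation $q$ with $q(x,x,y)=y=q(y,x,x)$ for all $x,y$. Higher commutator (Bulatov): for congruences $\alpha_0,\dots,\alpha_{n-1},\gamma$ of $\mathbf A$, say $\alpha_0,\dots,\alpha_{n-2}$ centralize $\alpha_{n-1}$ modulo $\gamma$ if for all tuples $\mathbf a_i,\mathbf b_i$ ($i<n$, of arbitrary lengths, with $\mathbf a_i\neq\mathbf b_i$ and $\mathbf a_i,\mathbf b_i$ congruent modulo $\alpha_i$ coordinatewise) and every term operation $t$ of $\mathbf A$ such that $t(\mathbf x_0,\dots,\mathbf x_{n-2},\mathbf a_{n-1})\equiv_\gamma t(\mathbf x_0,\dots,\mathbf x_{n-2},\mathbf b_{n-1})$ for all $(\mathbf x_0,\dots,\mathbf x_{n-2})\in(\{\mathbf a_0,\mathbf b_0\}\times\dots\times\{\mathbf a_{n-2},\mathbf b_{n-2}\})\setminus\{(\mathbf b_0,\dots,\mathbf b_{n-2})\}$, we have $t(\mathbf b_0,\dots,\mathbf b_{n-2},\mathbf a_{n-1})\equiv_\gamma t(\mathbf b_0,\dots,\mathbf b_{n-2},\mathbf b_{n-1})$. The commutator $[\alpha_0,\dots,\alpha_{n-1}]$ is the smallest congruence $\gamma$ such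 that $\alpha_0,\dots,\alpha_{n-2}$ centralize $\alpha_{n-1}$ modulo $\gamma$. Tuples in $A^m$ are indexed by $0,\dots,m-1$. For an integer $k\ge 0$ and $i\ge0$, $k_{(i)}\in\{0,1\}$ denotes the $i$-th binary digit of $k$ (counting from the least significant digit, starting at $0$), so $k=\sum_i 2^ik_{(i)}$. For $a,b\in A$ and $i<n$, $\mathbf c_i^n(a,b)\in A^{2^n}$ is the tuple whose $k$-th coordinate ($k<2^n$) is $a$ if $k_{(i)}=0$ and $b$ if $k_{(i)}=1$. For congruences $\alpha_0,\dots,\alpha_{n-1}$, $\Delta(\alpha_0,\dots,\alpha_{n-1})=\Delta_{\mathbf A}(\alpha_0,\dots,\alpha_{n-1})$ is the subuniverse of $\mathbf A^{2^n}$ generated by $\{\mathbf c_i^n(a,b): i<n,\ (a,b)\in\alpha_i\}$; for $n=0$, $\Delta()=A$. Forks: for $R\subseteq A^m$ and $i<m$, $\psi_i(R)$ is the set of pairs $(a,b)$ for which there exist $\mathbf c,\mathbf d\in R$ with $c_i=a$, $d_i=b$ and $c_j=d_j$ for all $j\neq i$. *)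

(* Defs.v *)
From mathcomp Require Import all_boot.
Set Implicit Arguments. Unset Strict Implicit. Unset Printing Implicit Defensive.

Section UA.
Variables (F : Type) (ar : F -> nat) (A : Type) (op : forall f : F, ('I_(ar f) -> A) -> A).

Inductive term (V : Type) : Type :=
  | Var : V -> term V
  | App : forall f : F, ('I_(ar f) -> term V) -> term V.

Fixpoint eval (V : Type) (env : V -> A) (t : term V) : A :=
  match t with
  | Var v => env v
  | App f ts => op (fun j => eval env (ts j))
  end.

Definition malcev : Prop :=
  exists q : term 'I_3,
    forall x y : A,
      eval (fun j : 'I_3 => nth x [:: x; x; y] j) q = y /\
      eval (fun j : 'I_3 => nth x [:: y; x; x] j) q = y.

Definition is_congruence (theta : A -> A -> Prop) : Prop :=
  (forall x, theta x x) /\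
  (forall x y, theta x y -> theta y x) /\
  (forall x y z, theta x y -> theta y z -> theta x z) /\
  (forall (f : F) (x y : 'I_(ar f) -> A),
      (forall j, theta (x j) (y j)) -> theta (op x) (op y)).

(* Assignment of variables: the variable (i, j) stands for the j-th coordinate of
   the i-th tuple argument; for i < n-1 the tuple is a_i or b_i according to s i,
   for the last index i = n-1 it is a_i or b_i according to last. *)
Definition centr_env (n : nat) (m : 'I_n -> nat) (a b : forall i : 'I_n, 'I_(m i) -> A)
    (s : 'I_n -> bool) (last : bool) : {i : 'I_n & 'I_(m i)} -> A :=
  fun p => let (i, j) := p in
    if i.+1 < n then (if s i then b i j else a i j)
    else (if last then b i j else a i j).

(* alpha_0, ..., alpha_{n-2} centralize alpha_{n-1} modulo gamma (Bulatov). *)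
Definition centralizes (n : nat) (alpha : 'I_n -> A -> A -> Prop) (gamma : A -> A -> Prop) : Prop :=
  forall (m : 'I_n -> nat) (a b : forall i : 'I_n, 'I_(m i) -> A),
    (forall i, exists j, a i j <> b i j) ->
    (forall i j, alpha i (a i j) (b i j)) ->
    forall t : term {i : 'I_n & 'I_(m i)},
      (forall s : 'I_n -> bool, (exists i : 'I_n, i.+1 < n /\ s i = false) ->
         gamma (eval (centr_env a b s false) t) (eval (centr_env a b s true) t)) ->
      gamma (eval (centr_env a b (fun _ => true) false) t)
            (eval (centr_env a b (fun _ => true) true) t).

Definition is_commutator (n : nat) (alpha : 'I_n -> A -> A -> Prop) (gamma : A -> A -> Prop) : Prop :=
  is_congruence gamma /\ centralizes alpha gamma /\
  forall gamma', is_congruence gamma' -> centralizes alpha gamma' ->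
    forall x y, gamma x y -> gamma' x y.

(* c_i^n(a,b) in A^(2^n): coordinate k is a if the i-th binary digit of k is 0, else b. *)
Definition cvec (n i : nat) (x y : A) : 'I_(2 ^ n) -> A :=
  fun k => if odd (k %/ 2 ^ i) then y else x.

Inductive Delta (n : nat) (alpha : 'I_n -> A -> A -> Prop) : ('I_(2 ^ n) -> A) -> Prop :=
  | Delta_gen : forall (i : 'I_n) (x y : A), alpha i x y -> @Delta n alpha (@cvec n i x y)
  | Delta_op : forall (f : F) (args : 'I_(ar f) -> 'I_(2 ^ n) -> A),
      (forall j, @Delta n alpha (args j)) ->
      @Delta n alpha (fun k => op (fun j => args j k)).

Definition psi (m : nat) (i : 'I_m) (R : ('I_m -> A) -> Prop) : A -> A -> Prop :=
  fun x y => exists c d : 'I_m -> A,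
    R c /\ R d /\ c i = x /\ d i = y /\ (forall j : 'I_m, j != i -> c j = d j).

End UA.

Lemma last_idx_lt (n : nat) : (2 ^ n).-1 < 2 ^ n.
Proof. by rewrite ltn_predL expn_gt0. Qed.

Definition last_idx (n : nat) : 'I_(2 ^ n) := Ordinal (last_idx_lt n).

(* Main.v *)
Require Import Defs.
From mathcomp Require Import all_boot.
From mathcomp Require Import zify.
From Stdlib Require Import FunctionalExtensionality PropExtensionality ClassicalEpsilon Classical.
Set Implicit Arguments. Unset Strict Implicit. Unset Printing Implicit Defensive.

Section Terms.
Variables (F : Type) (ar : F -> nat) (A : Type) (op : forall f : F, ('I_(ar f) -> A) -> A).

Fixpoint rename (V W : Type) (g : V -> W) (t : term ar V) : term ar W :=
  match t with Var v => Var ar (g v) | App f ts => App (fun j => rename g (ts j)) end.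

Fixpoint subst (V W : Type) (sg : V -> term ar W) (t : term ar V) : term ar W :=
  match t with Var v => sg v | App f ts => App (fun j => subst sg (ts j)) end.

Lemma eval_ext V (e1 e2 : V -> A) t : (forall v, e1 v = e2 v) -> eval op e1 t = eval op e2 t.
Proof.
move=> H; elim: t => [v|f ts IH] //=; congr op; apply: functional_extensionality => j; exact: IH.
Qed.

Lemma eval_rename V W (g : V -> W) env t :
  eval op env (rename g t) = eval op (fun v => env (g v)) t.
Proof.
elim: t => [v|f ts IH] //=; congr op; apply: functional_extensionality => j; exact: IH.
Qed.

Lemma eval_subst V W (sg : V -> term ar W) env t :
  eval op env (subst sg t) = eval op (fun v => eval op env (sg v)) t.
Proof.
elim: t => [v|f ts IH] //=; congr op; apply: functional_extensionality => j; exact: IH.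
Qed.

Lemma eval_cong (th : A -> A -> Prop) V (e1 e2 : V -> A) t :
  is_congruence op th -> (forall v, th (e1 v) (e2 v)) -> th (eval op e1 t) (eval op e2 t).
Proof.
move=> [_ [_ [_ Hop]]] H; elim: t => [v|f ts IH] //=; exact: Hop.
Qed.

End Terms.

Section Cubes.
Variables (F : Type) (ar : F -> nat) (A : Type) (op : forall f : F, ('I_(ar f) -> A) -> A).
Variable (q : term ar 'I_3).
Definition Q (x y z : A) := eval op (fun j : 'I_3 => nth x [:: x; y; z] j) q.
Hypothesis hq1 : forall x y, Q x x y = y.
Hypothesis hq2 : forall x y, Q y x x = y.
Variables (n : nat) (alpha : 'I_n -> A -> A -> Prop).
Hypothesis congs : forall i, is_congruence op (alpha i).

Definition BV := {ffun 'I_n -> bool}.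
Definition one : BV := [ffun => true].

Inductive D' : (BV -> A) -> Prop :=
| D'gen i x y : alpha i x y -> D' (fun s => if s i then y else x)
| D'op f (args : 'I_(ar f) -> BV -> A) :
    (forall j, D' (args j)) -> D' (fun s => op (fun j => args j s)).

Lemma D'_eval V (env : V -> BV -> A) t :
  (forall v, D' (env v)) -> D' (fun s => eval op (fun v => env v s) t).
Proof.
move=> H; elim: t => [v|f ts IH] /=; first exact: H.
exact: (D'op IH).
Qed.

Lemma Q_nth (x y z : A) (c : 'I_3 -> A) :
  c (inord 0) = x -> c (inord 1) = y -> c (inord 2) = z ->
  eval op c q = Q x y z.
Proof.
move=> h0 h1 h2; apply: eval_ext => j.
case: j => [[|[|[|j]]] Hj] //=.
- by rewrite -h0; congr c; apply: val_inj; rewrite /= inordK.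
- by rewrite -h1; congr c; apply: val_inj; rewrite /= inordK.
- by rewrite -h2; congr c; apply: val_inj; rewrite /= inordK.
Qed.

Lemma D'_Q c1 c2 c3 : D' c1 -> D' c2 -> D' c3 -> D' (fun s => Q (c1 s) (c2 s) (c3 s)).
Proof.
move=> H1 H2 H3.
have := @D'_eval _ (fun j : 'I_3 => nth c1 [:: c1; c2; c3] j) q.
have -> : (fun s => eval op (fun v : 'I_3 => nth c1 [:: c1; c2; c3] v s) q)
   = (fun s => Q (c1 s) (c2 s) (c3 s)).
  by apply: functional_extensionality => s; apply: Q_nth; rewrite /= inordK.
apply; case => [[|[|[|j]]] Hj] //=.
Qed.

Lemma D'_pre (h : BV -> BV) c :
  (forall i, (exists b, forall s, h s i = b) \/ (exists b, forall s, h s i = b (+) s i)) ->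
  D' c -> D' (fun s => c (h s)).
Proof.
move=> Hh; elim => [i x y Hxy|f args _ IH] /=.
- have [_ [Hsym _]] := congs i.
  case: (Hh i) => [[b Hb]|[b Hb]].
  + have -> : (fun s => if h s i then y else x) =
              (fun s : BV => if s i then (if b then y else x) else (if b then y else x)).
      by apply: functional_extensionality => s; rewrite Hb; case: (s i).
    apply: D'gen; case: (congs i) => Hr _; exact: Hr.
  + case: b Hb => Hb.
    * have -> : (fun s => if h s i then y else x) = (fun s : BV => if s i then x else y).
        by apply: functional_extensionality => s; rewrite Hb; case: (s i).
      by apply: D'gen; apply: Hsym.
    * have -> : (fun s => if h s i then y else x) = (fun s : BV => if s i then y else x).
        by apply: functional_extensionality => s; rewrite Hb; case: (s i).
      exact: D'gen.
- exact: (D'op IH).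
Qed.

Definition gam (x y : A) := exists c d, D' c /\ D' d /\ c one = x /\ d one = y /\
   forall s, s != one -> c s = d s.

Lemma gam_move u v s0 : gam u v -> exists C E, D' C /\ D' E /\ C s0 = u /\ E s0 = v /\
   forall s, s != s0 -> C s = E s.
Proof.
move=> [c [d [Hc [Hd [Hcu [Hdv Hcd]]]]]].
pose h (s : BV) : BV := [ffun i => (~~ s0 i) (+) s i].
have Hh : forall i, (exists b, forall s, h s i = b) \/ (exists b, forall s, h s i = b (+) s i).
  by move=> i; right; exists (~~ s0 i) => s; rewrite ffunE.
have h0 : h s0 = one by apply/ffunP => i; rewrite !ffunE; case: (s0 i).
exists (fun s => c (h s)), (fun s => d (h s)); split; first exact: D'_pre.
split; first exact: D'_pre.
rewrite h0; split => //; split => // s Hs; apply: Hcd.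
apply: contra Hs => /eqP Hs; apply/eqP/ffunP => i.
have := congr1 (fun f : BV => f i) Hs; rewrite !ffunE; by case: (s i); case: (s0 i).
Qed.

Lemma choice_fun (I X : Type) (P : I -> X -> Prop) :
  (forall i, exists x, P i x) -> exists g, forall i, P i (g i).
Proof.
move=> H; exists (fun i => proj1_sig (constructive_indefinite_description _ (H i))).
move=> i; exact: proj2_sig.
Qed.

Hypothesis hn : 0 < n.

Lemma D'_const x : D' (fun _ => x).
Proof.
have -> : (fun _ : BV => x) = (fun s : BV => if s (Ordinal hn) then x else x).
  by apply: functional_extensionality => s; case: (s _).
by apply: D'gen; case: (congs (Ordinal hn)).
Qed.

Lemma gam_cong : is_congruence op gam.
Proof.
split.
  move=> x; exists (fun _ => x), (fun _ => x); split; first exact: D'_const.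
  by split; first exact: D'_const.
split.
  move=> x y [c [d [Hc [Hd [H1 [H2 H3]]]]]]; exists d, c; do 4! (split => //).
  by move=> s Hs; rewrite H3.
split.
  move=> x y z [c [d [Hc [Hd [H1 [H2 H3]]]]]] [c' [d' [Hc' [Hd' [H1' [H2' H3']]]]]].
  exists c, (fun s => Q (d' s) (c' s) (d s)); split => //; split; first exact: D'_Q.
  split => //; split; first by rewrite H1' H2' -H2 hq2.
  by move=> s Hs; rewrite H3' // hq1 H3.
move=> f x y H.
have H' : forall j, exists p : (BV -> A) * (BV -> A), D' p.1 /\ D' p.2 /\
    p.1 one = x j /\ p.2 one = y j /\ forall s, s != one -> p.1 s = p.2 s.
  by move=> j; case: (H j) => c [d Hj]; exists (c, d).
have [cd Hcd] := choice_fun H'.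
exists (fun s => op (fun j => (cd j).1 s)), (fun s => op (fun j => (cd j).2 s)).
split; first by apply: D'op => j; case: (Hcd j).
split; first by apply: D'op => j; case: (Hcd j) => ? [].
split; first by congr op; apply: functional_extensionality => j; case: (Hcd j) => ? [? [->]].
split; first by congr op; apply: functional_extensionality => j; case: (Hcd j) => ? [? [? [->]]].
move=> s Hs; congr op; apply: functional_extensionality => j.
by case: (Hcd j) => ? [? [? [? ->]]].
Qed.

Lemma iter_upd e g (l : seq BV) : D' e -> (forall s0, s0 \in l -> gam (e s0) (g s0)) ->
  D' (fun s => if s \in l then g s else e s).
Proof.
move=> He; elim: l => [|s0 l IH] Hl.
  have -> : (fun s => if s \in [::] then g s else e s) = e.
    by apply: functional_extensionality => s; rewrite in_nil.
  done.
have IH' : D' (fun s : BV => if s \in l then g s else e s).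
  by apply: IH => s1 Hs1; apply: Hl; rewrite in_cons Hs1 orbT.
case Hs0: (s0 \in l).
  have -> : (fun s => if s \in s0 :: l then g s else e s) = (fun s => if s \in l then g s else e s).
    apply: functional_extensionality => s; rewrite in_cons.
    by case: eqP => // ->; rewrite Hs0.
  exact: IH'.
have [C [E [HC [HE [HC0 [HE0 HCE]]]]]] := gam_move s0 (Hl s0 (mem_head _ _)).
have -> : (fun s => if s \in s0 :: l then g s else e s) =
          (fun s => Q (if s \in l then g s else e s) (C s) (E s)).
  apply: functional_extensionality => s; rewrite in_cons.
  case: eqP => [->|/eqP Hne] /=.
    by rewrite Hs0 HC0 HE0 hq1.
  by rewrite HCE // hq2.
exact: D'_Q.
Qed.

Lemma ln_lt : n.-1 < n. Proof. by rewrite ltn_predL. Qed.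
Definition ln : 'I_n := Ordinal ln_lt.

Lemma lt_ln (i : 'I_n) : (i.+1 < n) = (i != ln).
Proof.
rewrite -(inj_eq val_inj) /=; case: i => i Hi /=.
apply/idP/idP => H.
- apply/eqP => E; move: H; rewrite E; lia.
- move/eqP: H => H; lia.
Qed.

Definition upd (s : BV) (bb : bool) : BV := [ffun i => if i == ln then bb else s i].

Lemma D'_upd c bb : D' c -> D' (fun s => c (upd s bb)).
Proof.
apply: D'_pre => i; case: (i =P ln) => [E|/eqP E].
- by left; exists bb => s; rewrite ffunE E eqxx.
- by right; exists false => s; rewrite ffunE (negbTE E).
Qed.

Lemma gam_centr : centralizes op alpha gam.
Proof.
move=> m a b _ Hab t Hyp.
pose env (s : BV) (v : {i : 'I_n & 'I_(m i)}) := let (i, j) := v in if s i then b i j else a i j.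
pose e s := eval op (env s) t.
have He : D' e.
  apply: (@D'_eval _ (fun v s => env s v)) => [[i j]] /=; exact: D'gen.
pose mk (s : 'I_n -> bool) (last : bool) : BV := [ffun i : 'I_n => if i.+1 < n then s i else last].
have Henv : forall s last, eval op (centr_env a b s last) t = e (mk s last).
  move=> s last; apply: eval_ext => v; case: v => i j /=; rewrite ffunE; by case: ifP.
pose l := filter (fun s : BV => (s ln) && (s != one)) (enum {: BV}).
have Hl : forall s, (s \in l) = (s ln) && (s != one) by move=> s; rewrite mem_filter mem_enum andbT.
have [_ [Gsym _]] := gam_cong.
have HR := @iter_upd e (fun s => e (upd s false)) l He.
have HR' : D' (fun s => if s \in l then e (upd s false) else e s).
  apply: HR => s0; rewrite Hl => /andP [Hs0 Hne].
  have [i Hi] : exists i, s0 i = false.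
    apply: NNPP => Hno; move/eqP: Hne; apply; apply/ffunP => i; rewrite ffunE.
    by case E: (s0 i) => //; exfalso; apply: Hno; exists i.
  have Hi' : i != ln by apply: contraTneq Hs0 => <-; rewrite Hi.
  have Hlt : i.+1 < n by rewrite lt_ln.
  have := Hyp (fun i => s0 i) (ex_intro _ i (conj Hlt Hi)).
  rewrite !Henv => H; apply: Gsym; congr gam: H; congr e; apply/ffunP => k; rewrite !ffunE lt_ln.
  - by case: eqP.
  - by case: eqP => // ->.
rewrite !Henv.
exists (fun s => e (upd s false)), (fun s => if s \in l then e (upd s false) else e s).
split; first exact: D'_upd.
split => //.
split; first by congr e; apply/ffunP => k; rewrite !ffunE lt_ln; case: eqP.
split.
  rewrite Hl eqxx andbF; congr e; apply/ffunP => k; rewrite !ffunE; by case: ifP.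
move=> s Hs; rewrite Hl Hs andbT; case E: (s ln) => //.
congr e; apply/ffunP => k; rewrite !ffunE; by case: eqP => // ->.
Qed.

Record Rep := { RV : finType; Ridx : RV -> 'I_n; Rxs : RV -> A; Rys : RV -> A; Rt : term ar RV }.

Definition Renv (r : Rep) (s : BV) (v : RV r) := if s (Ridx v) then Rys v else Rxs v.
Arguments Renv : clear implicits.

Lemma D'_rep c : D' c -> exists r : Rep, (forall v : RV r, alpha (Ridx v) (Rxs v) (Rys v)) /\
   forall s, c s = eval op (Renv r s) (Rt r).
Proof.
elim => [i x y Hxy|f args _ IH].
  exists (@Build_Rep unit (fun _ => i) (fun _ => x) (fun _ => y) (Var ar tt)).
  by split.
have [rr Hrr] := choice_fun IH.
pose V := {j : 'I_(ar f) & RV (rr j)}.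
pose idx (v : V) := let (j, w) := v in Ridx w.
pose xs (v : V) := let (j, w) := v in Rxs w.
pose ys (v : V) := let (j, w) := v in Rys w.
pose t : term ar V := App (fun j => rename (fun w => existT (fun j => RV (rr j)) j w) (Rt (rr j))).
exists (@Build_Rep _ idx xs ys t); split.
  by move=> [j w] /=; case: (Hrr j) => H _; exact: H.
move=> s /=; congr op; apply: functional_extensionality => j.
rewrite eval_rename; case: (Hrr j) => _ ->; done.
Qed.
Lemma upd_ln s bb : upd s bb ln = bb.
Proof. by rewrite ffunE eqxx. Qed.

Lemma gam_min th : is_congruence op th -> centralizes op alpha th ->
  forall x y, gam x y -> th x y.
Proof.
move=> Hth Hcen x y [c [d [Hc [Hd [Hx [Hy Hcd]]]]]].
have [Thr [Ths _]] := Hth.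
have [r1 [Ha1 Hr1]] := D'_rep Hc.
have [r2 [Ha2 Hr2]] := D'_rep Hd.
pose W := (RV r1 + (RV r2 + RV r2))%type.
pose idxW (w : W) := match w with inl v => Ridx v | inr (inl v) => Ridx v | inr (inr v) => Ridx v end.
pose xsW (w : W) := match w with inl v => Rxs v | inr (inl v) => Rxs v
    | inr (inr v) => if Ridx v == ln then Rys v else Rxs v end.
pose ysW (w : W) := match w with inl v => Rys v | inr (inl v) => Rys v | inr (inr v) => Rys v end.
have HaW : forall w, alpha (idxW w) (xsW w) (ysW w).
  case=> [v|[v|v]] /=; [exact: Ha1|exact: Ha2|].
  case: eqP => _; last exact: Ha2.
  by case: (congs (Ridx v)) => Hr _; apply: Hr.
pose envW (s : BV) (w : W) := if s (idxW w) then ysW w else xsW w.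
pose t1 : term ar W := rename inl (Rt r1).
pose t2 : term ar W := rename (fun v => inr (inl v)) (Rt r2).
pose t3 : term ar W := rename (fun v => inr (inr v)) (Rt r2).
pose T : term ar W := subst (fun j : 'I_3 => nth t1 [:: t1; t2; t3] j) q.
have HT : forall s, eval op (envW s) T = Q (c s) (d s) (d (upd s true)).
  move=> s; rewrite eval_subst; apply: Q_nth; rewrite inordK //= eval_rename.
  - by rewrite Hr1.
  - by rewrite Hr2.
  - rewrite Hr2; apply: eval_ext => v; rewrite /Renv /envW /= ffunE.
    by case: eqP => [->|_]; case: (s _).
have Hsym : forall a b, th a b -> th b a by move=> ? ? ?; apply: Ths.
case: (classic (forall i : 'I_n, exists w : W, idxW w = i /\ xsW w <> ysW w)) => Hnd; last first.
  have [i0 Hi0] := not_all_ex_not _ _ Hnd.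
  have Hdeg : forall w, idxW w = i0 -> xsW w = ysW w.
    move=> w Hw; apply: NNPP => Hne; apply: Hi0; by exists w.
  pose s1 : BV := [ffun i => i != i0].
  have Hs1 : s1 != one by apply/eqP => /ffunP /(_ i0); rewrite !ffunE eqxx.
  have Ec : c one = c s1.
    rewrite !Hr1; apply: eval_ext => v; rewrite /Renv !ffunE.
    case: eqP => [E|]; last by [].
    by rewrite /=; symmetry; exact: (Hdeg (inl v) E).
  have Ed : d one = d s1.
    rewrite !Hr2; apply: eval_ext => v; rewrite /Renv !ffunE.
    case: eqP => [E|]; last by [].
    by rewrite /=; symmetry; exact: (Hdeg (inr (inl v)) E).
  by rewrite -Hx -Hy Ec Ed Hcd.
pose m := fun _ : 'I_n => #|{: W}|.
pose a := fun (i : 'I_n) (j : 'I_(m i)) => xsW (enum_val j).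
pose b := fun (i : 'I_n) (j : 'I_(m i)) =>
   if idxW (enum_val j) == i then ysW (enum_val j) else xsW (enum_val j).
pose t' := @rename _ _ W {i : 'I_n & 'I_(m i)}
   (fun w => existT (fun i => 'I_(m i)) (idxW w) (enum_rank w)) T.
pose mk (s : 'I_n -> bool) (last : bool) : BV := [ffun i : 'I_n => if i.+1 < n then s i else last].
have Het : forall s last, eval op (centr_env a b s last) t' = eval op (envW (mk s last)) T.
  move=> s last; rewrite eval_rename; apply: eval_ext => w.
  rewrite /= /a /b /envW enum_rankK eqxx ffunE.
  by case: ifP => _; case: ifP.
have := Hcen m a b _ _ t'.
rewrite !Het !HT.
have Emk1 : mk (fun _ => true) true = one by apply/ffunP => i; rewrite !ffunE; case: ifP.
have Emk0 : forall s, upd (mk s false) true = mk s true.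
  by move=> s; apply/ffunP => k; rewrite !ffunE lt_ln; case: eqP.
have Emk0' : forall s, mk s false != one.
  by move=> s; apply/eqP => /ffunP /(_ ln); rewrite !ffunE lt_ln eqxx.
have Eup : forall s, upd s true = s -> upd s true = s by [].
rewrite Emk1 Emk0 -(Hcd _ (Emk0' _)) hq1.
have -> : upd one true = one by apply/ffunP => k; rewrite !ffunE; case: ifP.
rewrite hq2 -Hx -Hy => H; apply: Hsym.
have E1 : mk xpredT true = one by apply/ffunP => i; rewrite !ffunE; case: ifP.
rewrite -[X in th (d X) _]E1; apply: H.
- move=> i; have [w [Hw Hne]] := Hnd i.
  exists (enum_rank w); rewrite /a /b enum_rankK Hw eqxx; exact: Hne.
- move=> i j; rewrite /a /b; case: eqP => [<-|_]; first exact: HaW.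
  by case: (congs i) => Hr _; apply: Hr.
- move=> s [i [Hi Hsi]]; rewrite !Het !HT.
  rewrite Emk0 -(Hcd _ (Emk0' _)) hq1.
  have Hup : upd (mk s true) true = mk s true.
    by apply/ffunP => k; rewrite !ffunE lt_ln; case: eqP => // ->.
  have Hne : mk s true != one.
    by apply/eqP => /ffunP /(_ i); rewrite !ffunE Hi Hsi.
  by rewrite Hup (Hcd _ Hne) hq1.
Qed.
Definition bitsf (k : 'I_(2 ^ n)) : BV := [ffun i : 'I_n => odd (k %/ 2 ^ i)].

Lemma bits_inj_nat N : forall k k', k < 2 ^ N -> k' < 2 ^ N ->
  (forall i, i < N -> odd (k %/ 2 ^ i) = odd (k' %/ 2 ^ i)) -> k = k'.
Proof.
elim: N => [|N IH] k k' Hk Hk' H.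
  by move: Hk Hk'; rewrite expn0 !ltnS !leqn0 => /eqP -> /eqP ->.
have H0 := H 0 isT; rewrite !expn0 !divn1 in H0.
have E : k %/ 2 = k' %/ 2.
  apply: IH.
  - by rewrite ltn_divLR // -expnSr.
  - by rewrite ltn_divLR // -expnSr.
  - by move=> i Hi; rewrite -!divnMA -expnS; apply: H.
by rewrite (divn_eq k 2) (divn_eq k' 2) E !modn2 H0.
Qed.

Lemma bitsf_inj : injective bitsf.
Proof.
move=> k k' /ffunP H; apply: val_inj; apply: (@bits_inj_nat n); [exact: ltn_ord|exact: ltn_ord|].
move=> i Hi; have := H (Ordinal Hi); by rewrite !ffunE.
Qed.

Lemma bitsf_bij : bijective bitsf.
Proof. apply: (inj_card_bij bitsf_inj). by rewrite card_ffun card_bool !card_ord. Qed.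

Lemma bitsf_last : bitsf (last_idx n) = one.
Proof.
apply/ffunP => i; rewrite !ffunE /=.
case: i => i Hi /=.
have Hp : 0 < 2 ^ (n - i) by rewrite expn_gt0.
have Hr : 0 < 2 ^ i by rewrite expn_gt0.
have E : (2 ^ n).-1 = (2 ^ (n - i)).-1 * 2 ^ i + (2 ^ i).-1.
  rewrite -[in LHS](subnKC (ltnW Hi)) expnD.
  move: Hp Hr; move: (2 ^ (n - i)) (2 ^ i) => p r Hp Hr; nia.
rewrite E divnMDl // divn_small ?addn0; last by rewrite ltn_predL.
rewrite -subn1 oddB // oddX; case: (n - i) (subn_gt0 i n) => [|k]; last by [].
by rewrite Hi.
Qed.

Lemma Delta_D' g e : cancel g bitsf -> Delta op alpha e -> D' (fun s => e (g s)).
Proof.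
move=> Hg; elim => [i x y Hxy|f args _ IH].
  have -> : (fun s => cvec i x y (g s)) = (fun s : BV => if s i then y else x).
    apply: functional_extensionality => s; rewrite /cvec.
    by have := congr1 (fun f : BV => f i) (Hg s); rewrite ffunE => ->.
  exact: D'gen.
exact: (D'op IH).
Qed.

Lemma D'_Delta c : D' c -> Delta op alpha (fun k => c (bitsf k)).
Proof.
elim => [i x y Hxy|f args _ IH].
  have -> : (fun k => (fun s : BV => if s i then y else x) (bitsf k)) = cvec i x y.
    by apply: functional_extensionality => k; rewrite ffunE.
  exact: Delta_gen.
exact: (Delta_op IH).
Qed.

Lemma psi_gam x y : psi (last_idx n) (Delta op alpha) x y <-> gam x y.
Proof.
have [g Hg1 Hg2] := bitsf_bij.
have gL : g one = last_idx n by rewrite -bitsf_last Hg1.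
split.
  move=> [c [d [Hc [Hd [Hx [Hy H]]]]]].
  exists (fun s => c (g s)), (fun s => d (g s)).
  split; first exact: Delta_D'.
  split; first exact: Delta_D'.
  rewrite gL; do 2! (split => //).
  move=> s Hs; apply: H; apply: contra Hs => /eqP E.
  by rewrite -(Hg2 s) E bitsf_last.
move=> [c [d [Hc [Hd [Hx [Hy H]]]]]].
exists (fun k => c (bitsf k)), (fun k => d (bitsf k)).
split; first exact: D'_Delta.
split; first exact: D'_Delta.
rewrite bitsf_last; do 2! (split => //).
move=> k Hk; apply: H; apply: contra Hk => /eqP E.
by apply/eqP; apply: bitsf_inj; rewrite E bitsf_last.
Qed.

End Cubes.

Theorem mainTheorem1 (F : Type) (ar : F -> nat) (A : Type)
    (op : forall f : F, ('I_(ar f) -> A) -> A)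
    (n : nat) (alpha : 'I_n -> A -> A -> Prop) :
  malcev op -> 1 <= n ->
  (forall i, is_congruence op (alpha i)) ->
  is_commutator op alpha (psi (last_idx n) (Delta op alpha)).
Proof.
move=> [q Hq] hn congs.
have hq1 : forall x y, Q op q x x y = y by move=> x y; case: (Hq x y) => ? ?.
have hq2 : forall x y, Q op q y x x = y.
  move=> x y; rewrite /Q -[RHS](proj2 (Hq x y)); apply: eval_ext => j.
  by case: j => [[|[|[|j]]] Hj].
have -> : psi (last_idx n) (Delta op alpha) = gam op alpha.
  apply: functional_extensionality => x; apply: functional_extensionality => y.
  apply: propositional_extensionality; exact: psi_gam.
split; first exact: (gam_cong hq1 hq2 congs hn).
split; first exact: (gam_centr hq1 hq2 congs hn).
move=> th Hth Hc; exact: (gam_min hq1 hq2 congs).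
Qed.
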